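(* For every integer $n\ge4$: $\gamma_{(2,1,1)}(P_n)=\frac{2n}{3}+1$ if $n\equiv0\pmod3$ and $\gamma_{(2,1,1)}(P_n)=2\lceil n/3\rceil$ otherwise; and $\gamma_{(2,1,1)}(C_n)=\lceil 2n/3\rceil$.
   Context: $P_n$ and $C_n$ denote the path and the cycle on $n$ vertices. For a graph $G$, a function $f:V(G)\to\{0,1,2\}$ is a $(2,1,1)$-dominating function if $\sum_{u\in N(v)}f(u)\ge2$ for every vertex $v$ with $f(v)=0$, and $\sum_{u\in N(v)}f(u)\ge1$ for every vertex $v$ with $f(v)\in\{1,2\}$, where $N(v)$ is the open neighbourhood. $\gamma_{(2,1,1)}(G)$ is the minimum of $\sum_{v}f(v)$ over all $(2,1,1)$-dominating functions $f$. *)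

(* Defs.v *)
From mathcomp Require Import all_boot all_order.
Set Implicit Arguments. Unset Strict Implicit. Unset Printing Implicit Defensive.

Definition weight (T : finType) (f : {ffun T -> 'I_3}) : nat := \sum_(v : T) (f v : nat).

Definition nbsum (T : finType) (adj : rel T) (f : {ffun T -> 'I_3}) (v : T) : nat :=
  \sum_(u : T | adj v u) (f u : nat).

Definition dom211 (T : finType) (adj : rel T) (f : {ffun T -> 'I_3}) : bool :=
  [forall v : T, if (f v : nat) == 0 then 2 <= nbsum adj f v else 1 <= nbsum adj f v].

(* The default 2*|T| is >= the weight of every function, so it never undercuts
   the minimum when some dominating function exists (e.g. the constant 2 function
   whenever every vertex has a neighbour). *)
Definition gamma211 (T : finType) (adj : rel T) : nat :=
  \big[minn/(2 * #|T|)]_(f : {ffun T -> 'I_3} | dom211 adj f) weight f.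

Definition path_adj (n : nat) : rel 'I_n :=
  fun i j => (i.+1 == j :> nat) || (j.+1 == i :> nat).

Definition cycle_adj (n : nat) : rel 'I_n :=
  fun i j => path_adj i j ||
             ((i == 0 :> nat) && (j == n.-1 :> nat)) ||
             ((j == 0 :> nat) && (i == n.-1 :> nat)).

(* Main.v *)
Require Import Defs.
From mathcomp Require Import all_boot all_order.
From mathcomp Require Import zify.
Set Implicit Arguments. Unset Strict Implicit. Unset Printing Implicit Defensive.

Lemma gamma_le (T : finType) (adj : rel T) f : dom211 adj f -> gamma211 adj <= weight f.
Proof.
move=> hf; rewrite /gamma211.
have : f \in index_enum {ffun T -> 'I_3} by rewrite mem_index_enum.
elim: (index_enum _) => [|x r IH] //; rewrite inE big_cons.
case/orP=> [/eqP <-|hr]; first by rewrite hf geq_minl.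
case: ifP => _; last exact: IH.
by rewrite geq_min IH // orbT.
Qed.

Lemma gamma_ge (T : finType) (adj : rel T) B :
  B <= 2 * #|T| -> (forall f, dom211 adj f -> B <= weight f) -> B <= gamma211 adj.
Proof.
move=> h1 h2; rewrite /gamma211; elim/big_ind: _ => //.
  by move=> x y hx hy; rewrite leq_min hx hy.
Qed.

Lemma sum_split (I : finType) (P Q : pred I) (F : I -> nat) :
  (forall u, ~~ (P u && Q u)) ->
  \sum_(u | P u || Q u) F u = \sum_(u | P u) F u + \sum_(u | Q u) F u.
Proof.
move=> h; rewrite (big_mkcond (fun u => P u || Q u)) (big_mkcond P) (big_mkcond Q) -big_split.
apply: eq_bigr => u _; move: (h u); case: (P u); case: (Q u) => //=; by rewrite addn0.
Qed.

Lemma countC m : \sum_(0 <= i < m) (i %% 3 != 2 : nat) = m - m %/ 3.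
Proof.
elim: m => [|m IH]; first by rewrite big_geq.
rewrite big_nat_recr //= IH. lia.
Qed.

Lemma sum3 (H : nat -> nat) a : \sum_(a <= i < a.+3) H i = H a + H a.+1 + H a.+2.
Proof. by rewrite /index_iota -addn3 addKn big_cons big_cons big_cons big_nil /= addn0 addnA. Qed.
Lemma sum2 (H : nat -> nat) a : \sum_(a <= i < a.+2) H i = H a + H a.+1.
Proof. by rewrite /index_iota -addn2 addKn big_cons big_cons big_nil /= addn0. Qed.
Lemma sum1 (H : nat -> nat) a : \sum_(a <= i < a.+1) H i = H a.
Proof. by rewrite big_nat1. Qed.

Lemma sumW (H : nat -> nat) a m :
  (forall j, j < m -> 2 <= H (a + 3 * j) + H (a + 3 * j).+1 + H (a + 3 * j).+2) ->
  2 * m <= \sum_(a <= i < a + 3 * m) H i.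
Proof.
elim: m => [|m IH] h; first by rewrite big_geq // addn0.
rewrite (big_cat_nat _ (n := a + 3 * m)); [|lia|lia].
have e : a + 3 * m.+1 = (a + 3 * m).+3 by lia.
rewrite e sum3.
have h1 := IH (fun j hj => h j (ltnW (leq_trans hj (leqnn _)) : j < m.+1) ).
have h2 := h m (ltnSn m).
rewrite /=. lia.
Qed.

Section PL.
Variable H : nat -> nat.
Lemma sumW' a b m :
  b = a + 3 * m ->
  (forall j, j < m -> 2 <= H (a + 3 * j) + H (a + 3 * j).+1 + H (a + 3 * j).+2) ->
  2 * m <= \sum_(a <= i < b) H i.
Proof. by move=> ->; apply: sumW. Qed.
Lemma sum3' a a1 a2 b : a.+1 = a1 -> a1.+1 = a2 -> a2.+1 = b ->
  \sum_(a <= i < b) H i = H a + H a1 + H a2.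
Proof. by move=> <- <- <-; apply: sum3. Qed.
Lemma sum2' a a1 b : a.+1 = a1 -> a1.+1 = b ->
  \sum_(a <= i < b) H i = H a + H a1.
Proof. by move=> <- <-; apply: sum2. Qed.
Lemma sum1' a b : a.+1 = b -> \sum_(a <= i < b) H i = H a.
Proof. by move=> <-; apply: sum1. Qed.

Lemma path_lb n : 4 <= n -> H 0 = 0 -> H n.+1 = 0 ->
  (forall v, v < n -> (H v.+1 = 0 -> 2 <= H v + H v.+2) /\ 1 <= H v + H v.+2) ->
  (if n %% 3 == 0 then (2 * n) %/ 3 + 1 else 2 * ((n + 2) %/ 3))
   <= \sum_(1 <= i < n.+1) H i.
Proof.
move=> hn h0 hn1 loc.
have loc' : forall a b c, a.+1 = b -> b.+1 = c -> c <= n.+1 ->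
    (H b = 0 -> 2 <= H a + H c) /\ 1 <= H a + H c.
  by move=> a b c <- <- hc; apply: loc; lia.
have W : forall j, 2 <= H j + H j.+1 + H j.+2 \/ n <= j.
  move=> j; case: (ltnP j n) => hj; last by right.
  left; have := loc j hj; lia.
have hk := divn_eq n 3; have hr := ltn_pmod n (isT : 0 < 3).
set k := n %/ 3 in hk.
have Wk : forall a b m, b = a + 3 * m -> b <= n.+1 -> 2 * m <= \sum_(a <= i < b) H i.
  move=> a b m eb hb; apply: sumW' => // j hj; case: (W (a + 3 * j)) => //; lia.
case hr0: (n %% 3) hk hr => [|[|[|r]]] hk hr //=.
- have [h1|h1] := eqVneq (H 1) 0.
    rewrite (big_cat_nat _ (n := 4)) //=; [|lia].
    rewrite (@sum3' (1) (2) (3) _) //.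
    have := Wk 4 n.+1 (k - 1) ltac:(lia) (leqnn _).
    have := loc' 0 1 2 erefl erefl ltac:(lia).
    have := loc' 1 2 3 erefl erefl ltac:(lia).
    lia.
  have [h2|h2] := eqVneq (H n) 0.
    rewrite (big_cat_nat _ (n := n - 2)) //=; [|lia|lia].
    rewrite (@sum3' (n-2) (n-1) (n) _); [|lia|lia|lia].
    have := Wk 1 (n - 2) (k - 1) ltac:(lia) ltac:(lia).
    have := loc' (n-1) n n.+1 ltac:(lia) erefl ltac:(lia).
    have := loc' (n-2) (n-1) n ltac:(lia) ltac:(lia) ltac:(lia).
    lia.
  rewrite (big_cat_nat _ (n := 3)) //=; [|lia].
  rewrite (big_cat_nat _ (m := 3) (n := n) (p := n.+1)) //=; [|lia].
  rewrite (@sum2' (1) (2) _) // (@sum1' (n) _) //.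
  have := Wk 3 n (k - 1) ltac:(lia) ltac:(lia).
  have := loc' 0 1 2 erefl erefl ltac:(lia).
  lia.
- rewrite (big_cat_nat _ (n := 3)) //=; [|lia].
  rewrite (big_cat_nat _ (m := 3) (n := n - 1) (p := n.+1)) //=; [|lia|lia].
  rewrite (@sum2' (1) (2) _) // (@sum2' (n-1) (n) _); [|lia|lia].
  have := Wk 3 (n - 1) (k - 1) ltac:(lia) ltac:(lia).
  have := loc' 0 1 2 erefl erefl ltac:(lia).
  have := loc' (n-1) n n.+1 ltac:(lia) erefl ltac:(lia).
  lia.
- rewrite (big_cat_nat _ (n := 3)) //=; [|lia].
  rewrite (@sum2' (1) (2) _) //.
  have := Wk 3 n.+1 k ltac:(lia) ltac:(lia).
  have := loc' 0 1 2 erefl erefl ltac:(lia).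
  lia.

Qed.
End PL.

Definition G n (f : {ffun 'I_n -> 'I_3}) (j : nat) : nat :=
  \sum_(u : 'I_n | (u : nat) == j) (f u : nat).
Definition Hp n (f : {ffun 'I_n -> 'I_3}) (i : nat) : nat :=
  if i is i'.+1 then G f i' else 0.

Lemma G_ord n f (v : 'I_n) : G f v = f v.
Proof. by rewrite /G (big_pred1 v) // => u; rewrite val_eqE. Qed.

Lemma G_out n f j : n <= j -> @G n f j = 0.
Proof.
move=> hj; rewrite /G big_pred0 // => u; apply/negbTE.
by rewrite neq_ltn (leq_trans (ltn_ord u) hj).
Qed.

Lemma weight_G n f : weight f = \sum_(0 <= j < n) @G n f j.
Proof. by rewrite /weight big_mkord; apply: eq_bigr => v _; rewrite G_ord. Qed.

Lemma shiftH n f : \sum_(1 <= i < n.+1) @Hp n f i = \sum_(0 <= j < n) G f j.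
Proof.
rewrite big_add1; apply: eq_big_nat => i /andP [h _]; by case: i h.
Qed.

Lemma nbsum_path n f (v : 'I_n) : nbsum (@path_adj n) f v = Hp f v + Hp f v.+2.
Proof.
rewrite /nbsum (eq_bigl (fun u : 'I_n => ((u : nat) == v.+1) || (u.+1 == v))); last first.
  by move=> u; rewrite /path_adj eq_sym.
rewrite sum_split; last by move=> u; apply/negP => /andP [/eqP a /eqP b]; lia.
rewrite addnC; congr (_ + _).
case: v => [[|v'] hv] /=; first by rewrite big_pred0.
by apply: eq_bigl => u; rewrite eqSS.
Qed.

Lemma path_loc n f : dom211 (@path_adj n) f ->
  forall v, v < n -> (Hp f v.+1 = 0 -> 2 <= Hp f v + Hp f v.+2) /\ 1 <= Hp f v + Hp f v.+2.
Proof.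
move=> /forallP hd v hv.
have -> : Hp f v.+1 = f (Ordinal hv) by rewrite /= (G_ord f (Ordinal hv)).
have := hd (Ordinal hv); rewrite nbsum_path.
rewrite /=; case: ifP => /eqP h; lia.
Qed.

Lemma path_lower n (hn : 4 <= n) f : dom211 (@path_adj n) f ->
  (if n %% 3 == 0 then (2 * n) %/ 3 + 1 else 2 * ((n + 2) %/ 3)) <= weight f.
Proof.
move=> hd; rewrite weight_G -shiftH; apply: path_lb => //.
by rewrite /= G_out.
exact: path_loc.
Qed.

Definition mk3 (k : nat) : 'I_3 := inord k.
Lemma mk3K k : k < 3 -> (mk3 k : nat) = k.
Proof. by move=> h; rewrite /mk3 inordK. Qed.

Definition Fp n (i : nat) : nat := 1 - ((i %% 3 == 2) && (i.+2 < n)).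
Definition fp n : {ffun 'I_n -> 'I_3} := [ffun i : 'I_n => mk3 (Fp n i)].

Lemma fpE n (i : 'I_n) : (fp n i : nat) = Fp n i.
Proof. by rewrite ffunE mk3K //; rewrite /Fp; lia. Qed.

Lemma G_fp n j : G (fp n) j = if j < n then Fp n j else 0.
Proof.
case: ltnP => h; last exact: G_out.
by rewrite (G_ord (fp n) (Ordinal h)) fpE.
Qed.

Lemma fp_dom n : 4 <= n -> dom211 (@path_adj n) (fp n).
Proof.
move=> hn; apply/forallP => v; rewrite nbsum_path fpE.
have hv := ltn_ord v.
case: (nat_of_ord v) hv => [|v'] hv /=; rewrite !G_fp /Fp;
  repeat case: ifP => ? ; lia.
Qed.

Lemma fp_weight n : 4 <= n ->
  weight (fp n) <= (if n %% 3 == 0 then (2 * n) %/ 3 + 1 else 2 * ((n + 2) %/ 3)).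
Proof.
move=> hn; rewrite weight_G.
rewrite (big_cat_nat _ (n := n - 2)) //=; [|lia].
rewrite (@sum2' _ (n-2) (n-1) _); [|lia|lia].
rewrite (eq_big_nat _ _ (F2 := fun i => (i %% 3 != 2 : nat))); last first.
  move=> i hi; rewrite G_fp /Fp; case: ifP => ?; lia.
rewrite countC !G_fp /Fp.
case: ifP => ?; case: ifP => ?; case: ifP => ?; lia.
Qed.

Lemma oeq n (u w : 'I_n) : (u == w) = ((u : nat) == (w : nat)).
Proof. by []. Qed.

Lemma ordS_val n (v : 'I_n) : (ordS v : nat) = if v.+1 == n then 0 else v.+1.
Proof.
rewrite /=; case: eqP => h; first by rewrite h modnn.
by rewrite modn_small //; have := ltn_ord v; lia.
Qed.

Lemma ord_pred_val n (v : 'I_n) : (ord_pred v : nat) = if (v : nat) == 0 then n.-1 else v.-1.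
Proof.
have hv := ltn_ord v.
rewrite /=; case: eqP => h.
  by rewrite h add0n modn_small //; lia.
have -> : (v + n).-1 = v.-1 + n by lia.
by rewrite modnDr modn_small //; lia.
Qed.

Lemma nbsum_cycle n f (v : 'I_n) : 3 <= n ->
  nbsum (@cycle_adj n) f v = f (ord_pred v) + f (ordS v).
Proof.
move=> hn; rewrite /nbsum.
rewrite (eq_bigl (fun u => (u == ord_pred v) || (u == ordS v))); last first.
  move=> u; rewrite !oeq.
  rewrite ord_pred_val ordS_val /cycle_adj /path_adj.
  have := ltn_ord u; have := ltn_ord v.
  case: ifP => ?; case: ifP => ?; lia.
rewrite sum_split; last first.
  move=> u; apply/negP => /andP [/eqP -> /eqP e].
  have := congr1 (@nat_of_ord n) e; rewrite ord_pred_val ordS_val.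
  have := ltn_ord v; case: ifP => ?; case: ifP => ?; lia.
by rewrite !big_pred1_eq.
Qed.

Lemma cycle_lower n (hn : 3 <= n) f : dom211 (@cycle_adj n) f -> (2 * n + 2) %/ 3 <= weight f.
Proof.
move=> /forallP hd.
have h : \sum_(v : 'I_n) 2 <= \sum_(v : 'I_n) ((f (ord_pred v) : nat) + f v + f (ordS v)).
  apply: leq_sum => v _; have := hd v; rewrite nbsum_cycle //.
  case: ifP => /eqP ?; lia.
rewrite !big_split /= in h.
have e1 : \sum_(v : 'I_n) (f (ordS v) : nat) = weight f by rewrite /weight [RHS](reindex_inj (@ordS_inj n)).
have e2 : \sum_(v : 'I_n) (f (ord_pred v) : nat) = weight f by rewrite /weight [RHS](reindex_inj (@ord_pred_inj n)).
rewrite e1 e2 -/(weight f) sum_nat_const card_ord in h.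
lia.
Qed.

Definition Fc (i : nat) : nat := 1 - (i %% 3 == 2).
Definition fc n : {ffun 'I_n -> 'I_3} := [ffun i : 'I_n => mk3 (Fc i)].

Lemma fcE n (i : 'I_n) : (fc n i : nat) = Fc i.
Proof. by rewrite ffunE mk3K //; rewrite /Fc; lia. Qed.

Lemma fc_dom n : 3 <= n -> dom211 (@cycle_adj n) (fc n).
Proof.
move=> hn; apply/forallP => v; rewrite nbsum_cycle // !fcE ord_pred_val ordS_val /Fc.
have := ltn_ord v.
case: ifP => ?; case: ifP => ?; case: ifP => ?; lia.
Qed.

Lemma fc_weight n : weight (fc n) = (2 * n + 2) %/ 3.
Proof.
rewrite /weight.
rewrite (eq_bigr (fun i : 'I_n => (i %% 3 != 2 : nat))); last first.
  by move=> i _; rewrite fcE /Fc; lia.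
rewrite -(big_mkord xpredT (fun i => (i %% 3 != 2 : nat))) countC; lia.
Qed.

Theorem proposition12 (n : nat) (hn : 4 <= n) :
  gamma211 (@path_adj n) =
    (if n %% 3 == 0 then (2 * n) %/ 3 + 1 else 2 * ((n + 2) %/ 3))
  /\ gamma211 (@cycle_adj n) = (2 * n + 2) %/ 3.
Proof.
split; apply/eqP; rewrite eqn_leq; apply/andP; split.
- exact: leq_trans (gamma_le (fp_dom hn)) (fp_weight hn).
- apply: gamma_ge; last exact: path_lower.
  rewrite card_ord; case: ifP => _; lia.
- by rewrite -(fc_weight n); apply: gamma_le; apply: fc_dom; lia.
- apply: gamma_ge; first by rewrite card_ord; lia.
  by apply: cycle_lower; lia.
Qed.
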